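(* Let $\mathcal{C}$ be a systematic $[n,k,d]$ linear code over $\mathbb{F}_q$ with information symbols in the first $k$ coordinates, which is an $(r,\delta)_i$ code and achieves $$d = n-k+1-\left(\left\lceil \tfrac{k}{r}\right\rceil -1\right)(\delta-1).$$ Then the generalized Hamming weights of the dual code satisfy $$d^{\perp}_{(\lceil k/r\rceil -1)(\delta-1)+i} \;=\; k+\left(\left\lceil \tfrac{k}{r}\right\rceil -1\right)(\delta-1)+i$$ for all $1 \le i \le n-k-(\delta-1)\left(\lceil k/r\rceil -1\right)$.
   Context: For a linear code $\mathcal{D}$ of dimension $m$, its $j$-th generalized Hamming weight ($1\le j\le m$) is the minimum, over all $j$-dimensional subcodes $\mathcal{E}$ of $\mathcal{D}$, of the size of the support $\mathrm{supp}(\mathcal{E}) = \bigcup_{\mathbf{c}\in\mathcal{E}}\{l : c_l \neq 0\}$. $d^\perp_j$ denotes the $j$-th generalized Hamming weight of the dual code $\mathcal{C}^\perp$. Coordinate $i$ has locality $(r,\delta)$ if there is $S_i \subseteq [n]$ with $i\in S_i$, $|S_i|\le r+\delta-1$, such that the punctured code $\mathcal{C}|_{S_i}$ (delete coordinates outside $S_i$) has minimum distance at least $\delta$. An $(r,\delta)_i$ code is a systematic linear code in which all $k$ information coordinates have locality $(r,\delta)$. *)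

(* Defs.v *)
(* Linear codes of length n over a finite field F are
   represented as row spaces of n x n matrices (mxalgebra). *)
From HB Require Import structures.
From mathcomp Require Import all_boot all_order all_algebra all_fingroup all_field.
Set Implicit Arguments. Unset Strict Implicit. Unset Printing Implicit Defensive.
Import GRing.Theory Num.Theory.
Local Open Scope ring_scope.

Section Codes.
Variables (F : finFieldType) (n : nat).

Definition in_code (C : 'M[F]_n) (c : 'rV[F]_n) : bool := (c <= C)%MS.

Definition supp (c : 'rV[F]_n) : {set 'I_n} := [set l | c 0 l != 0].

Definition suppmx (E : 'M[F]_n) : {set 'I_n} :=
  [set l | [exists c : 'rV[F]_n, (c <= E)%MS && (c 0 l != 0)]].

Definition mindist (C : 'M[F]_n) : nat :=
  \big[minn/n]_(c : 'rV[F]_n | (c <= C)%MS && (c != 0)) #|supp c|.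

Definition dual (C : 'M[F]_n) : 'M[F]_n := kermx C^T.

Definition ghw (D : 'M[F]_n) (j : nat) : nat :=
  \big[minn/n]_(E : 'M[F]_n | (E <= D)%MS && (\rank E == j)) #|suppmx E|.

Definition systematic_first (C : 'M[F]_n) (k : nat) : Prop :=
  exists G : 'M[F]_(k, n), (G == C)%MS /\
    forall (a : 'I_k) (j : 'I_n), (j < k)%N -> G a j = (nat_of_ord a == j)%:R.

(* coordinate i has locality (r, delta): there is S containing i with
   |S| <= r + delta - 1 such that the punctured code C|_S has minimum
   distance >= delta (every codeword nonzero on S has >= delta nonzero
   entries in S) *)
Definition has_locality (C : 'M[F]_n) (r delta : nat) (i : 'I_n) : Prop :=
  exists S : {set 'I_n}, i \in S /\ (#|S| <= r + delta - 1)%N /\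
    forall c : 'rV[F]_n, (c <= C)%MS -> (supp c :&: S != set0) ->
      (delta <= #|supp c :&: S|)%N.

Definition rdelta_i_code (C : 'M[F]_n) (k r delta : nat) : Prop :=
  systematic_first C k /\
  forall i : 'I_n, (i < k)%N -> has_locality C r delta i.

End Codes.

Definition ceil_div (k r : nat) : nat := (k + r - 1) %/ r.

(* Main.v *)
Require Import Defs.
From HB Require Import structures.
From mathcomp Require Import all_boot all_order all_algebra all_fingroup all_field.
From mathcomp Require Import zify.
Import GRing.Theory Num.Theory.
Local Open Scope ring_scope.

Lemma bigmin_le_helper (T : eqType) (r : seq T) (P : pred T) (f : T -> nat) (m : nat) x :
  x \in r -> P x -> (\big[minn/m]_(i <- r | P i) f i <= f x)%N.
Proof.
elim: r => [//|y r IH]; rewrite inE big_cons => /orP [/eqP <- ->|xr Px].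
  exact: geq_minl.
case: (P y); last exact: IH.
exact: leq_trans (geq_minr _ _) (IH xr Px).
Qed.

Lemma bigmin_ge_helper (T : eqType) (r : seq T) (P : pred T) (f : T -> nat) (m b : nat) :
  (b <= m)%N -> (forall x, P x -> b <= f x)%N -> (b <= \big[minn/m]_(i <- r | P i) f i)%N.
Proof.
move=> bm H; apply: (big_ind (fun x => b <= x)%N) => //.
by move=> x y hx hy; rewrite leq_min hx hy.
Qed.

Lemma subset_card (T : finType) (A : {set T}) (m : nat) :
  (m <= #|A|)%N -> exists B : {set T}, B \subset A /\ #|B| = m.
Proof.
move eq: (#|A| - m)%N => e; elim: e A eq => [|e IH] A eq le.
  by exists A; split => //; lia.
have: (0 < #|A|)%N by lia.
move/card_gt0P => [x xA].
have hc : #|A :\ x| = (#|A|).-1 by rewrite (cardsD1 x A) xA.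
have [B [sB cB]] := IH (A :\ x) ltac:(lia) ltac:(lia).
exists B; split => //; apply: subset_trans sB _; exact: subsetDl.
Qed.

Arguments subset_card {T A m}.

Section Lin.
Variables (F : finFieldType) (n : nat).

Definition Sel (U : {set 'I_n}) : 'M[F]_(n, #|U|) :=
  \matrix_(l, a) ((l == enum_val a)%:R).

Definition Zv (U : {set 'I_n}) : 'M[F]_n := kermx (Sel U).

Lemma Zv_rank (U : {set 'I_n}) : (n - #|U| <= \rank (Zv U))%N.
Proof. by rewrite /Zv mxrank_ker leq_sub2l // rank_leq_col. Qed.

Lemma Zv_vanish (U : {set 'I_n}) (c : 'rV[F]_n) l : (c <= Zv U)%MS -> l \in U -> c 0 l = 0.
Proof.
rewrite /Zv sub_kermx => /eqP H lU.
move/matrixP: H => /(_ 0 (enum_rank_in lU l)).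
rewrite !mxE => <-.
rewrite (bigD1 l) //= !mxE enum_rankK_in // eqxx mulr1 big1 ?addr0 //.
by move=> i /negbTE il; rewrite mxE enum_rankK_in // il mulr0.
Qed.

Lemma Zv_row_vanish (U : {set 'I_n}) m (M : 'M[F]_(m, n)) a l : (M <= Zv U)%MS -> l \in U -> M a l = 0.
Proof.
move=> H lU; have := Zv_vanish U _ l (submx_trans (row_sub a M) H) lU.
by rewrite mxE.
Qed.

Lemma suppmxS (E : 'M[F]_n) (B : 'M[F]_n) : (E <= B)%MS -> suppmx E \subset suppmx B.
Proof.
move=> EB; apply/subsetP => l; rewrite !inE => /existsP [c /andP [cE cl]].
by apply/existsP; exists c; rewrite cl (submx_trans cE EB).
Qed.

Lemma suppmx_Zv (U : {set 'I_n}) (E : 'M[F]_n) : (E <= Zv (~: U))%MS -> suppmx E \subset U.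
Proof.
move=> EZ; apply/subsetP => l; rewrite inE => /existsP [c /andP [cE cl]].
apply: contraR cl => lU; apply/eqP; apply: (Zv_vanish (~: U) c l (submx_trans cE EZ)).
by rewrite inE.
Qed.

Lemma lower_bound (C E : 'M[F]_n) (k j : nat) :
  (0 < k)%N -> (k + j <= n)%N -> \rank C = k -> (E <= dual C)%MS -> \rank E = j ->
  (#|suppmx E| < k + j)%N -> (mindist C <= n - (k + j - 1))%N.
Proof.
move=> k0 kjn rC EC rE lt.
set S := suppmx E in lt *.
have cS : (n - (k + j - 1) <= #|~: S|)%N.
  have := cardsC S; rewrite card_ord. lia.
have [B [BS cB]] := subset_card cS.
set U := ~: B.
have SU : S \subset U by rewrite /U subsetC.
have cU : #|U| = (k + j - 1)%N by have := cardsC B; rewrite card_ord -/U; lia.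
have ZE : (Zv U *m E^T) = 0.
  apply/matrixP => a b; rewrite [LHS]mxE [RHS]mxE big1 // => l _; rewrite [E^T _ _]mxE.
  case lU: (l \in U); first by rewrite (Zv_row_vanish U _ (Zv U) a l (submx_refl _) lU) mul0r.
  case El: (E b l == 0); first by rewrite (eqP El) mulr0.
  have : l \in S.
    rewrite inE; apply/existsP; exists (row b E); rewrite row_sub /= mxE El //.
  by move/(subsetP SU); rewrite lU.
have CE : (C *m E^T) = 0.
  move: EC; rewrite /dual sub_kermx => /eqP EC.
  by rewrite -[C]trmxK -trmx_mul EC trmx0.
have sumK : (C + Zv U <= kermx E^T)%MS.
  by rewrite addsmx_sub !sub_kermx CE ZE eqxx.
have rK := mxrankS sumK; rewrite mxrank_ker mxrank_tr rE in rK.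
have rZ := Zv_rank U; rewrite cU in rZ.
have hc := mxrank_sum_cap C (Zv U).
have rpos : (0 < \rank (C :&: Zv U))%N by lia.
set c := nz_row (C :&: Zv U)%MS.
have cnz : c != 0.
  by rewrite /c nz_row_eq0 -mxrank_eq0 -lt0n.
have cK := nz_row_sub (C :&: Zv U)%MS; rewrite -/c in cK.
have cC := submx_trans cK (capmxSl _ _).
have cZ := submx_trans cK (capmxSr _ _).
have suppc : supp c \subset B.
  apply/subsetP => l; rewrite inE; apply: contraR => lB.
  by rewrite (Zv_vanish U c l cZ) ?eqxx // /U inE lB.
apply: leq_trans (_ : #|supp c| <= _)%N; last by rewrite -cB subset_leq_card.
by apply: bigmin_le_helper; rewrite ?mem_index_enum // cC cnz.
Qed.

Lemma upper_bound (C : 'M[F]_n) (k j : nat) :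
  (k + j <= n)%N -> \rank C = k ->
  exists E : 'M[F]_n, [/\ (E <= dual C)%MS, \rank E = j & (#|suppmx E| <= k + j)%N].
Proof.
move=> kjn rC.
have cT : (k + j <= #|[set: 'I_n]|)%N by rewrite cardsT card_ord.
have [U [_ cU]] := subset_card cT.
set E0 := (dual C :&: Zv (~: U))%MS.
have rD : \rank (dual C) = (n - k)%N by rewrite /dual mxrank_ker mxrank_tr rC.
have rZ := Zv_rank (~: U).
have cc := cardsC U; rewrite card_ord in cc.
have hc := mxrank_sum_cap (dual C) (Zv (~: U)).
have hs := rank_leq_col (dual C + Zv (~: U))%MS.
have rE0 : (j <= \rank E0)%N by rewrite /E0; lia.
exists <<(pid_mx j : 'M[F]_(\rank E0)) *m row_base E0>>%MS; split.
- by rewrite genmxE (submx_trans (submxMl _ _)) // eq_row_base capmxSl.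
- by rewrite genmxE mxrankMfree ?row_base_free // rank_pid_mx.
- rewrite -cU subset_leq_card // suppmx_Zv // genmxE (submx_trans (submxMl _ _)) //.
  by rewrite eq_row_base capmxSr.
Qed.

End Lin.
Arguments Zv_vanish {F n U c l}.
Arguments Zv_row_vanish {F n U m M}.
Arguments Zv_rank {F n}.
Arguments suppmx_Zv {F n U E}.
Arguments suppmxS {F n E B}.
Arguments upper_bound {F n C k j}.
Arguments lower_bound {F n C E k j}.

Theorem corollary1 (F : finFieldType) (n k d r delta : nat) (C : 'M[F]_n) :
  (0 < k)%N -> (0 < r)%N -> (0 < delta)%N ->
  \rank C = k ->
  mindist C = d ->
  rdelta_i_code C k r delta ->
  (d%:Z = n%:Z - k%:Z + 1 - ((ceil_div k r)%:Z - 1) * (delta%:Z - 1)) ->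
  forall i : nat, (1 <= i)%N ->
    (i <= n - k - (delta - 1) * (ceil_div k r - 1))%N ->
    ghw (dual C) ((ceil_div k r - 1) * (delta - 1) + i) =
      (k + (ceil_div k r - 1) * (delta - 1) + i)%N.
Proof.
move=> k0 r0 dl0 rC md _ Hd i i1 ile.
have cd1 : (1 <= ceil_div k r)%N.
  by rewrite /ceil_div divn_gt0 //; lia.
have eM : ((ceil_div k r)%:Z - 1) * (delta%:Z - 1) = ((ceil_div k r - 1) * (delta - 1))%N%:Z.
  by rewrite PoszM; congr (_ * _); lia.
rewrite eM in Hd.
move: ile Hd; rewrite [((delta - 1) * _)%N]mulnC.
set t := ((ceil_div k r - 1) * (delta - 1))%N => ile Hd.
have Hdn : (d + t + k = n + 1)%N by lia.
have kjn : (k + (t + i) <= n)%N by lia.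
rewrite -addnA; apply/eqP; rewrite eqn_leq; apply/andP; split.
  have [E [ED rE sE]] := upper_bound kjn rC.
  apply: leq_trans sE.
  by apply: bigmin_le_helper; rewrite ?mem_index_enum // ED rE eqxx.
apply: bigmin_ge_helper => // E /andP [ED /eqP rE].
rewrite leqNgt; apply/negP => lt.
have := lower_bound k0 kjn rC ED rE lt.
rewrite md; lia.
Qed.
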